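(* Let $\tau\in F_2$ and let $[a,b]$ be $[(\tfrac12,0),(0,0)]$ or $[(\tfrac12,0),(0,\tfrac12)]$. Then $$|\theta_{a,b}(0,\tau)|\,e^{\pi\,{}^ta\operatorname{Im}\tau\,a}\ge 4-\Big(1+\Big(1+\tfrac{\sqrt6}{\sqrt{\operatorname{Im}\tau_1}}\Big)e^{-\pi\operatorname{Im}\tau_1/6}\Big)\Big(2+\Big(1+\tfrac{2}{\sqrt{\operatorname{Im}\tau_2}}\Big)e^{-\pi\operatorname{Im}\tau_2/4}\Big)-\Big(1+\Big(2+\tfrac{\sqrt2}{\sqrt{\operatorname{Im}\tau_2}}\Big)e^{-\pi\operatorname{Im}\tau_2/2}\Big)-e^{-\pi\operatorname{Im}\tau_2}-\Big(1+\Big(1+\tfrac{\sqrt2}{\sqrt{\operatorname{Im}\tau_2}}\Big)e^{-\pi\operatorname{Im}\tau_2/2}\Big)e^{-2\pi\operatorname{Im}\tau_1},$$ and this bound is positive when $\operatorname{Im}\tau_1\ge4$. The same bound, with $\tau_1$ and $\tau_2$ exchanged, holds for the characteristics $[(0,\tfrac12),(0,0)]$ and $[(0,\tfrac12),(\tfrac12,0)]$.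
   Context: $F_2$ is the standard Siegel fundamental domain for $\mathrm{Sp}_4(\mathbb{Z})$ acting on symmetric complex $2\times2$ matrices $\tau=\begin{pmatrix}\tau_1&\tau_{12}\\ \tau_{12}&\tau_2\end{pmatrix}$ with $\operatorname{Im}\tau>0$; every $\tau\in F_2$ satisfies $|\operatorname{Re}\tau_{ij}|\le 1/2$, $\operatorname{Im}\tau_2\ge\operatorname{Im}\tau_1\ge 2\operatorname{Im}\tau_{12}\ge 0$, $\operatorname{Im}\tau_1\ge\sqrt3/2$. $\theta_{a,b}(Z,\tau)=\sum_{n\in\mathbb{Z}^2}\exp\big(2i\pi(\tfrac12{}^t(n+a)\tau(n+a)+{}^t(n+a)(Z+b))\big)$. *)

(* Defs.v *)
From Stdlib Require Import Reals ZArith.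
Open Scope R_scope.

Definition Cx := (R * R)%type.
Definition Cadd (z w : Cx) : Cx := (fst z + fst w, snd z + snd w).
Definition Csub (z w : Cx) : Cx := (fst z - fst w, snd z - snd w).
Definition Cmul (z w : Cx) : Cx :=
  (fst z * fst w - snd z * snd w, fst z * snd w + snd z * fst w).
Definition Cscal (r : R) (z : Cx) : Cx := (r * fst z, r * snd z).
Definition Cnorm (z : Cx) : R := sqrt (fst z ^ 2 + snd z ^ 2).
Definition Cexp (z : Cx) : Cx := (exp (fst z) * cos (snd z), exp (fst z) * sin (snd z)).
Definition Ci : Cx := (0, 1).
Definition CofR (r : R) : Cx := (r, 0).

(** A symmetric complex 2x2 matrix tau = [[t1, t12], [t12, t2]]. *)
Record Sym2 := mkSym2 { t1 : Cx; t12 : Cx; t2 : Cx }.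
Definition Im1 (t : Sym2) : R := snd (t1 t).
Definition Im12 (t : Sym2) : R := snd (t12 t).
Definition Im2 (t : Sym2) : R := snd (t2 t).

Record Mat2Z := mkMat2Z { m11 : Z; m12 : Z; m21 : Z; m22 : Z }.
Definition mulZ (A B : Mat2Z) : Mat2Z :=
  mkMat2Z (m11 A * m11 B + m12 A * m21 B)%Z (m11 A * m12 B + m12 A * m22 B)%Z
          (m21 A * m11 B + m22 A * m21 B)%Z (m21 A * m12 B + m22 A * m22 B)%Z.
Definition trZ (A : Mat2Z) : Mat2Z := mkMat2Z (m11 A) (m21 A) (m12 A) (m22 A).
Definition subZ (A B : Mat2Z) : Mat2Z :=
  mkMat2Z (m11 A - m11 B)%Z (m12 A - m12 B)%Z (m21 A - m21 B)%Z (m22 A - m22 B)%Z.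
Definition idZ : Mat2Z := mkMat2Z 1 0 0 1.

(** [[A,B],[C,D]] is in Sp_4(Z), i.e. M^T J M = J with J = [[0,I],[-I,0]]. *)
Definition is_Sp4Z (A B C D : Mat2Z) : Prop :=
  mulZ (trZ A) C = mulZ (trZ C) A /\
  mulZ (trZ B) D = mulZ (trZ D) B /\
  subZ (mulZ (trZ A) D) (mulZ (trZ C) B) = idZ.

Definition detCtauD (C D : Mat2Z) (t : Sym2) : Cx :=
  let e (c1 c2 d : Z) (x y : Cx) := Cadd (Cadd (Cscal (IZR c1) x) (Cscal (IZR c2) y)) (CofR (IZR d)) in
  let M11 := e (m11 C) (m12 C) (m11 D) (t1 t) (t12 t) in
  let M12 := e (m11 C) (m12 C) (m12 D) (t12 t) (t2 t) in
  let M21 := e (m21 C) (m22 C) (m21 D) (t1 t) (t12 t) in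
  let M22 := e (m21 C) (m22 C) (m22 D) (t12 t) (t2 t) in
  Csub (Cmul M11 M22) (Cmul M12 M21).

Definition in_H2 (t : Sym2) : Prop :=
  0 < Im1 t /\ 0 < Im1 t * Im2 t - Im12 t ^ 2.

Definition in_F2 (t : Sym2) : Prop :=
  in_H2 t /\
  Rabs (fst (t1 t)) <= 1/2 /\ Rabs (fst (t12 t)) <= 1/2 /\ Rabs (fst (t2 t)) <= 1/2 /\
  (* Im tau Minkowski-reduced *)
  Im2 t >= Im1 t /\ Im1 t >= 2 * Im12 t /\ 2 * Im12 t >= 0 /\
  (forall A B C D : Mat2Z, is_Sp4Z A B C D -> Cnorm (detCtauD C D t) >= 1).

Definition R2 := (R * R)%type.
Definition C2 := (Cx * Cx)%type.

(** The summand of theta_{a,b}(Z, tau) at n in Z^2: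
    exp(2 i pi ( 1/2 (n+a)^t tau (n+a) + (n+a)^t (Z + b) )). *)
Definition theta_term (a b : R2) (Zv : C2) (t : Sym2) (n1 n2 : Z) : Cx :=
  let x1 := IZR n1 + fst a in
  let x2 := IZR n2 + snd a in
  let quad := Cadd (Cadd (Cscal (x1 * x1) (t1 t)) (Cscal (2 * x1 * x2) (t12 t)))
                   (Cscal (x2 * x2) (t2 t)) in
  let lin := Cadd (Cscal x1 (Cadd (fst Zv) (CofR (fst b))))
                  (Cscal x2 (Cadd (snd Zv) (CofR (snd b)))) in
  Cexp (Cmul (Cscal (2 * PI) Ci) (Cadd (Cscal (1/2) quad) lin)).

Definition theta_partial (a b : R2) (Zv : C2) (t : Sym2) (N : nat) : Cx :=
  let f i j := theta_term a b Zv t (Z.of_nat i - Z.of_nat N)%Z (Z.of_nat j - Z.of_nat N)%Z in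
  (sum_f_R0 (fun i => sum_f_R0 (fun j => fst (f i j)) (2 * N)) (2 * N),
   sum_f_R0 (fun i => sum_f_R0 (fun j => snd (f i j)) (2 * N)) (2 * N)).

(** v is the value of theta_{a,b}(Z,tau) (the series converges absolutely on H_2;
    we take the limit of the square partial sums). *)
Definition theta_is (a b : R2) (Zv : C2) (t : Sym2) (v : Cx) : Prop :=
  Un_cv (fun N => fst (theta_partial a b Zv t N)) (fst v) /\
  Un_cv (fun N => snd (theta_partial a b Zv t N)) (snd v).

Definition C2zero : C2 := ((0, 0), (0, 0)).

Definition aImA (a : R2) (t : Sym2) : R :=
  fst a * fst a * Im1 t + 2 * fst a * snd a * Im12 t + snd a * snd a * Im2 t.

Definition theta_bound (y1 y2 : R) : R :=
  4 - (1 + (1 + sqrt 6 / sqrt y1) * exp (- PI * y1 / 6))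
        * (2 + (1 + 2 / sqrt y2) * exp (- PI * y2 / 4))
    - (1 + (2 + sqrt 2 / sqrt y2) * exp (- PI * y2 / 2))
    - exp (- PI * y2)
    - (1 + (1 + sqrt 2 / sqrt y2) * exp (- PI * y2 / 2)) * exp (- 2 * PI * y1).

(* Main.v *)
Require Import Defs.
From Stdlib Require Import Reals ZArith Lra Lia Psatz Bool.
Open Scope R_scope.

Definition symsum (g : Z -> R) (N : nat) : R :=
  sum_f_R0 (fun i => g (Z.of_nat i - Z.of_nat N)%Z) (2 * N).
Definition SQ (h : Z -> Z -> R) (N : nat) : R :=
  symsum (fun n1 => symsum (fun n2 => h n1 n2) N) N.

Lemma symsum_0 g : symsum g 0 = g 0%Z.
Proof. reflexivity. Qed.

Lemma symsum_S g N :
  symsum g (S N) = symsum g N + g (- Z.of_nat (S N))%Z + g (Z.of_nat (S N)).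
Proof.
  unfold symsum.
  replace (2 * S N)%nat with (S (S (2 * N))) by lia.
  rewrite tech5.
  rewrite decomp_sum by lia. simpl pred.
  replace (Z.of_nat (S (S (2 * N))) - Z.of_nat (S N))%Z with (Z.of_nat (S N)) by lia.
  replace (Z.of_nat 0 - Z.of_nat (S N))%Z with (- Z.of_nat (S N))%Z by lia.
  rewrite (sum_eq (fun i => g (Z.of_nat (S i) - Z.of_nat (S N))%Z)
                  (fun i => g (Z.of_nat i - Z.of_nat N)%Z)).
  - simpl. ring.
  - intros i _. f_equal. lia.
Qed.

Lemma symsum_ext g1 g2 N :
  (forall n, (- Z.of_nat N <= n <= Z.of_nat N)%Z -> g1 n = g2 n) ->
  symsum g1 N = symsum g2 N.
Proof.
  intros H. unfold symsum. apply sum_eq. intros i Hi. apply H. lia.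
Qed.


Lemma symsum_plus g1 g2 N :
  symsum (fun n => g1 n + g2 n) N = symsum g1 N + symsum g2 N.
Proof.
  induction N as [|N IH]. - reflexivity.
  - rewrite !symsum_S, IH. ring.
Qed.

Lemma symsum_scal c g N :
  symsum (fun n => c * g n) N = c * symsum g N.
Proof.
  induction N as [|N IH]. - reflexivity.
  - rewrite !symsum_S, IH. ring.
Qed.

Lemma symsum_le g1 g2 N :
  (forall n, g1 n <= g2 n) -> symsum g1 N <= symsum g2 N.
Proof.
  intros H. induction N as [|N IH]. - rewrite !symsum_0; auto.
  - rewrite !symsum_S. specialize (H (- Z.of_nat (S N))%Z) as H1.
    specialize (H (Z.of_nat (S N))). lra.
Qed.

Lemma symsum_nonneg g N : (forall n, 0 <= g n) -> 0 <= symsum g N.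
Proof.
  intros H. induction N as [|N IH]. - rewrite !symsum_0; auto.
  - rewrite !symsum_S. specialize (H (- Z.of_nat (S N))%Z) as H1.
    specialize (H (Z.of_nat (S N))). lra.
Qed.

Lemma symsum_abs g N : Rabs (symsum g N) <= symsum (fun n => Rabs (g n)) N.
Proof.
  induction N as [|N IH]. - rewrite !symsum_0; lra.
  - rewrite !symsum_S.
    eapply Rle_trans; [apply Rabs_triang|].
    eapply Rle_trans; [apply Rplus_le_compat_r; apply Rabs_triang|]. lra.
Qed.

Lemma symsum_supp g N :
  (forall n, (n < - Z.of_nat N \/ Z.of_nat N < n)%Z -> g n = 0) ->
  forall M, (N <= M)%nat -> symsum g M = symsum g N.
Proof.
  intros H M HM. induction HM as [|M HM IH]. - reflexivity.
  - rewrite symsum_S, IH, !H by lia. ring.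
Qed.

Lemma symsum_zero g N : (forall n, g n = 0) -> symsum g N = 0.
Proof.
  intros H. induction N as [|N IH]. - rewrite symsum_0; auto.
  - rewrite symsum_S, IH, !H. ring.
Qed.

Lemma SQ_ext H1 H2 N :
  (forall a b, (- Z.of_nat N <= a <= Z.of_nat N)%Z -> (- Z.of_nat N <= b <= Z.of_nat N)%Z ->
     H1 a b = H2 a b) -> SQ H1 N = SQ H2 N.
Proof.
  intros H. unfold SQ. apply symsum_ext. intros a Ha. apply symsum_ext.
  intros b Hb. auto.
Qed.

Lemma SQ_plus H1 H2 N : SQ (fun a b => H1 a b + H2 a b) N = SQ H1 N + SQ H2 N.
Proof.
  unfold SQ. rewrite <- symsum_plus. apply symsum_ext. intros. apply symsum_plus.
Qed.

Lemma SQ_le H1 H2 N : (forall a b, H1 a b <= H2 a b) -> SQ H1 N <= SQ H2 N.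
Proof.
  intros H. unfold SQ. apply symsum_le. intros. apply symsum_le. auto.
Qed.

Lemma SQ_nonneg H1 N : (forall a b, 0 <= H1 a b) -> 0 <= SQ H1 N.
Proof.
  intros H. unfold SQ. apply symsum_nonneg. intros. apply symsum_nonneg. auto.
Qed.

Lemma SQ_abs H1 N : Rabs (SQ H1 N) <= SQ (fun a b => Rabs (H1 a b)) N.
Proof.
  unfold SQ. eapply Rle_trans; [apply symsum_abs|]. apply symsum_le.
  intros. apply symsum_abs.
Qed.

Lemma SQ_sep c u v N : SQ (fun a b => c * u a * v b) N = c * symsum u N * symsum v N.
Proof.
  unfold SQ. rewrite (symsum_ext _ (fun a => (c * symsum v N) * u a) N).
  - rewrite symsum_scal. ring.
  - intros a _. transitivity ((c * u a) * symsum v N).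
    + apply (symsum_scal (c * u a) v N).
    + ring.
Qed.

Lemma SQ_supp H1 N :
  (forall a b, (a < - Z.of_nat N \/ Z.of_nat N < a \/ b < - Z.of_nat N \/ Z.of_nat N < b)%Z ->
     H1 a b = 0) ->
  forall M, (N <= M)%nat -> SQ H1 M = SQ H1 N.
Proof.
  intros H M HM. unfold SQ.
  rewrite (symsum_ext _ (fun n1 => symsum (fun n2 => H1 n1 n2) N) M).
  - apply (symsum_supp _ N); [|exact HM]. intros a Ha. apply symsum_zero. intros b. apply H. lia.
  - intros a _. apply (symsum_supp _ N); [|exact HM]. intros b Hb. apply H. lia.
Qed.

Definition inb (N:nat) (n:Z) : bool := andb (- Z.of_nat N <=? n)%Z (n <=? Z.of_nat N)%Z.
Definition cut_in N (h:Z->Z->R) := fun a b => if (andb (inb N a) (inb N b)) then h a b else 0.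
Definition cut_out N (h:Z->Z->R) := fun a b => if (andb (inb N a) (inb N b)) then 0 else h a b.

Lemma inb_true N n : (- Z.of_nat N <= n <= Z.of_nat N)%Z -> inb N n = true.
Proof. intros. unfold inb. apply andb_true_iff. split; apply Z.leb_le; lia. Qed.
Lemma inb_false N n : (n < - Z.of_nat N \/ Z.of_nat N < n)%Z -> inb N n = false.
Proof.
  intros. unfold inb. apply andb_false_iff.
  destruct H; [left|right]; apply Z.leb_gt; lia.
Qed.

Lemma SQ_in N M h : (N <= M)%nat -> SQ (cut_in N h) M = SQ h N.
Proof.
  intros HM. rewrite (SQ_supp _ N); auto.
  - apply SQ_ext. intros a b Ha Hb. unfold cut_in.
    rewrite (inb_true N a), (inb_true N b); auto.
  - intros a b Hab. unfold cut_in.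
    destruct Hab as [H|[H|[H|H]]].
    + rewrite (inb_false N a); auto.
    + rewrite (inb_false N a); auto.
    + rewrite (inb_false N b); auto. now rewrite andb_false_r.
    + rewrite (inb_false N b); auto. now rewrite andb_false_r.
Qed.

Lemma SQ_diff N M h : (N <= M)%nat -> SQ h M - SQ h N = SQ (cut_out N h) M.
Proof.
  intros HM. rewrite <- (SQ_in N M h HM).
  rewrite (SQ_ext h (fun a b => cut_in N h a b + cut_out N h a b)).
  - rewrite SQ_plus. ring.
  - intros a b _ _. unfold cut_in, cut_out. destruct (andb (inb N a) (inb N b)); ring.
Qed.

Lemma SQ_conv h g B :
  (forall a b, Rabs (h a b) <= g a b) -> (forall N, SQ g N <= B) ->
  { l | Un_cv (SQ h) l }.
Proof.
  intros Hhg HB.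
  assert (Hg0 : forall a b, 0 <= g a b).
  { intros a b. eapply Rle_trans; [apply Rabs_pos|apply Hhg]. }
  assert (Hout : forall N M, (N <= M)%nat -> Rabs (SQ h M - SQ h N) <= SQ g M - SQ g N).
  { intros N M HM. rewrite !SQ_diff by exact HM.
    eapply Rle_trans; [apply SQ_abs|]. apply SQ_le. intros a b. unfold cut_out.
    destruct (andb (inb N a) (inb N b)); [rewrite Rabs_R0; lra| apply Hhg]. }
  assert (Hgrow : Un_growing (SQ g)).
  { intros N. assert (H := Hout N (S N) ltac:(lia)).
    assert (H2 := Rabs_pos (SQ h (S N) - SQ h N)). lra. }
  assert (Hub : has_ub (SQ g)).
  { exists B. intros x [i ->]. apply HB. }
  destruct (growing_cv _ Hgrow Hub) as [lg Hlg].
  assert (Hc := CV_Cauchy _ (exist _ lg Hlg)).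
  apply R_complete. intros eps Heps.
  destruct (Hc eps Heps) as [N0 HN0]. exists N0. intros n m Hn Hm.
  specialize (HN0 n m Hn Hm). unfold R_dist in *.
  destruct (le_lt_dec n m) as [Hnm|Hnm].
  - specialize (Hout n m Hnm). rewrite Rabs_minus_sym.
    assert (H3 := Rle_abs (SQ g m - SQ g n)). rewrite Rabs_minus_sym in H3. lra.
  - assert (Hmn : (m <= n)%nat) by lia. specialize (Hout m n Hmn).
    assert (H3 := Rle_abs (SQ g n - SQ g m)). lra.
Qed.

Lemma sqrt_le_sq x a : 0 <= a -> x <= a * a -> sqrt x <= a.
Proof. intros Ha H. rewrite <- (sqrt_square a Ha). apply sqrt_le_1_alt. exact H. Qed.
Lemma sqrt_ge_sq x a : 0 <= a -> a * a <= x -> a <= sqrt x.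
Proof. intros Ha H. rewrite <- (sqrt_square a Ha). apply sqrt_le_1_alt. exact H. Qed.

Lemma mink a b c d :
  sqrt ((a + c) ^ 2 + (b + d) ^ 2) <= sqrt (a ^ 2 + b ^ 2) + sqrt (c ^ 2 + d ^ 2).
Proof.
  assert (HA : 0 <= a ^ 2 + b ^ 2) by nra. assert (HB : 0 <= c ^ 2 + d ^ 2) by nra.
  assert (E1 := sqrt_sqrt _ HA). assert (E2 := sqrt_sqrt _ HB).
  assert (P1 := sqrt_pos (a ^ 2 + b ^ 2)). assert (P2 := sqrt_pos (c ^ 2 + d ^ 2)).
  set (sA := sqrt (a ^ 2 + b ^ 2)) in *. set (sB := sqrt (c ^ 2 + d ^ 2)) in *.
  apply sqrt_le_sq; [lra|].
  assert (Hcs : (a * c + b * d) * (a * c + b * d) <= (sA * sB) * (sA * sB)).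
  { replace ((sA * sB) * (sA * sB)) with ((sA * sA) * (sB * sB)) by ring.
    rewrite E1, E2.
    assert (E : (a ^ 2 + b ^ 2) * (c ^ 2 + d ^ 2) - (a * c + b * d) * (a * c + b * d) = (a * d - b * c) ^ 2) by ring.
    assert (0 <= (a * d - b * c) ^ 2) by apply pow2_ge_0. lra. }
  assert (Hp : 0 <= sA * sB) by nra.
  assert (a * c + b * d <= sA * sB) by nra.
  nra.
Qed.

Lemma abs_le_norm x y : Rabs x <= sqrt (x ^ 2 + y ^ 2).
Proof.
  apply sqrt_ge_sq; [apply Rabs_pos|].
  rewrite <- Rabs_mult, Rabs_pos_eq by nra. nra.
Qed.

Lemma symsum_cnorm p q N :
  sqrt ((symsum p N) ^ 2 + (symsum q N) ^ 2) <=
  symsum (fun n => sqrt (p n ^ 2 + q n ^ 2)) N.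
Proof.
  induction N as [|N IH].
  - rewrite !symsum_0. lra.
  - rewrite !symsum_S.
    eapply Rle_trans; [apply mink|].
    apply Rplus_le_compat_r.
    eapply Rle_trans; [apply mink|]. lra.
Qed.

Lemma SQ_cnorm P Q N :
  sqrt ((SQ P N) ^ 2 + (SQ Q N) ^ 2) <= SQ (fun a b => sqrt (P a b ^ 2 + Q a b ^ 2)) N.
Proof.
  unfold SQ. eapply Rle_trans; [apply symsum_cnorm|]. apply symsum_le. intros.
  apply symsum_cnorm.
Qed.

Lemma cv_shift U l : Un_cv U l -> Un_cv (fun n => U (S n)) l.
Proof.
  intros H eps Heps. destruct (H eps Heps) as [N HN]. exists N. intros n Hn.
  apply HN. lia.
Qed.

Lemma cv_const c : Un_cv (fun _ => c) c.
Proof.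
  intros eps Heps. exists 0%nat. intros. unfold R_dist. rewrite Rminus_diag, Rabs_R0. lra.
Qed.

Lemma theta_general (f : Z -> Z -> Cx) (C Bu Bv : R) (u v : Z -> R) (ind : Z -> Z -> R)
  (p1 p2 q1 q2 : Z) (z0 : Cx) :
  (forall a b, Cnorm (f a b) <= C * u a * v b) ->
  0 <= C -> (forall n, 0 <= u n) -> (forall n, 0 <= v n) ->
  (forall N, symsum u N <= Bu) -> (forall N, symsum v N <= Bv) ->
  (forall a b, 0 <= ind a b <= 1) ->
  (forall (h : Z -> Z -> R) N, (1 <= N)%nat ->
      SQ (fun a b => ind a b * h a b) N = h p1 p2 + h q1 q2) ->
  f p1 p2 = z0 -> f q1 q2 = z0 ->
  exists w : Cx, Un_cv (SQ (fun a b => fst (f a b))) (fst w) /\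
                 Un_cv (SQ (fun a b => snd (f a b))) (snd w) /\
     2 * Cnorm z0 - (C * Bu * Bv - C * (u p1 * v p2 + u q1 * v q2)) <= Cnorm w.
Proof.
  intros Hfg HC Hu Hv HBu HBv Hind Hmain Hp Hq.
  set (g := fun a b => C * u a * v b).
  assert (Hg0 : forall a b, 0 <= g a b).
  { intros. unfold g. apply Rmult_le_pos; [apply Rmult_le_pos|]; auto. }
  assert (HSg : forall N, SQ g N <= C * Bu * Bv).
  { intros N. unfold g. rewrite SQ_sep.
    assert (H1 := symsum_nonneg u N (Hu)). assert (H2 := symsum_nonneg v N (Hv)).
    specialize (HBu N). specialize (HBv N).
    apply Rmult_le_compat; [apply Rmult_le_pos; lra|lra| |lra].
    apply Rmult_le_compat_l; lra. }
  assert (H1 : forall a b, Rabs (fst (f a b)) <= g a b).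
  { intros. eapply Rle_trans; [apply abs_le_norm|]. apply Hfg. }
  assert (H2 : forall a b, Rabs (snd (f a b)) <= g a b).
  { intros. eapply Rle_trans; [|apply Hfg]. unfold Cnorm.
    rewrite Rplus_comm. apply abs_le_norm. }
  destruct (SQ_conv _ _ _ H1 HSg) as [l1 Hl1].
  destruct (SQ_conv _ _ _ H2 HSg) as [l2 Hl2].
  exists (l1, l2). split; [exact Hl1|]. split; [exact Hl2|]. simpl fst; simpl snd.
  set (Rb := C * Bu * Bv - C * (u p1 * v p2 + u q1 * v q2)).
  set (a0 := fst z0). set (b0 := snd z0).
  assert (Hdec : forall (P : Z -> Z -> R) N, (1 <= N)%nat ->
     SQ P N = P p1 p2 + P q1 q2 + SQ (fun a b => (1 - ind a b) * P a b) N).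
  { intros P N HN. rewrite <- (Hmain P N HN), <- SQ_plus. apply SQ_ext. intros. ring. }
  assert (Hbound : forall N, (1 <= N)%nat ->
     (SQ (fun a b => fst (f a b)) N - 2 * a0) ^ 2 +
     (SQ (fun a b => snd (f a b)) N - 2 * b0) ^ 2 <= Rb * Rb /\ 0 <= Rb).
  { intros N HN.
    rewrite (Hdec (fun a b => fst (f a b)) N HN), (Hdec (fun a b => snd (f a b)) N HN).
    rewrite Hp, Hq. fold a0 b0.
    replace (a0 + a0 + SQ (fun a b => (1 - ind a b) * fst (f a b)) N - 2 * a0)
      with (SQ (fun a b => (1 - ind a b) * fst (f a b)) N) by ring.
    replace (b0 + b0 + SQ (fun a b => (1 - ind a b) * snd (f a b)) N - 2 * b0)
      with (SQ (fun a b => (1 - ind a b) * snd (f a b)) N) by ring.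
    assert (Hn := SQ_cnorm (fun a b => (1 - ind a b) * fst (f a b))
                           (fun a b => (1 - ind a b) * snd (f a b)) N).
    assert (Hr : SQ (fun a b => sqrt (((1 - ind a b) * fst (f a b)) ^ 2 +
                                      ((1 - ind a b) * snd (f a b)) ^ 2)) N <= Rb).
    { eapply Rle_trans with (SQ (fun a b => (1 - ind a b) * g a b) N).
      - apply SQ_le. intros a b.
        specialize (Hind a b).
        replace (((1 - ind a b) * fst (f a b)) ^ 2 + ((1 - ind a b) * snd (f a b)) ^ 2)
          with (((1 - ind a b) * (1 - ind a b)) * (fst (f a b) ^ 2 + snd (f a b) ^ 2)) by ring.
        rewrite sqrt_mult_alt by nra. rewrite sqrt_square by lra.
        apply Rmult_le_compat_l; [lra|]. apply Hfg.
      - assert (E : SQ (fun a b => (1 - ind a b) * g a b) N = SQ g N - SQ (fun a b => ind a b * g a b) N).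
        { rewrite (Hdec g N HN), (Hmain g N HN). ring. }
        rewrite E, (Hmain g N HN). specialize (HSg N). unfold Rb. unfold g in *. lra. }
    set (X := SQ (fun a b => (1 - ind a b) * fst (f a b)) N) in *.
    set (Y := SQ (fun a b => (1 - ind a b) * snd (f a b)) N) in *.
    assert (Hs := sqrt_pos (X ^ 2 + Y ^ 2)).
    assert (HXY : 0 <= X ^ 2 + Y ^ 2) by nra.
    assert (E := sqrt_sqrt _ HXY).
    split; [|lra]. rewrite <- E. apply Rmult_le_compat; lra. }
  assert (HRb : 0 <= Rb) by (apply (Hbound 1%nat); lia).
  assert (Hlim : (l1 - 2 * a0) ^ 2 + (l2 - 2 * b0) ^ 2 <= Rb * Rb).
  { set (U1 := fun n => SQ (fun a b => fst (f a b)) (S n) - 2 * a0).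
    set (U2 := fun n => SQ (fun a b => snd (f a b)) (S n) - 2 * b0).
    assert (C1 : Un_cv U1 (l1 - 2 * a0)).
    { apply CV_minus; [apply cv_shift; exact Hl1| apply cv_const]. }
    assert (C2 : Un_cv U2 (l2 - 2 * b0)).
    { apply CV_minus; [apply cv_shift; exact Hl2| apply cv_const]. }
    assert (C3 := CV_plus _ _ _ _ (CV_mult _ _ _ _ C1 C1) (CV_mult _ _ _ _ C2 C2)).
    replace ((l1 - 2 * a0) ^ 2 + (l2 - 2 * b0) ^ 2) with
           ((l1 - 2 * a0) * (l1 - 2 * a0) + (l2 - 2 * b0) * (l2 - 2 * b0)) by ring.
    eapply Rle_cv_lim; [| exact C3 | apply (cv_const (Rb * Rb))].
    intros n. cbv beta. destruct (Hbound (S n) ltac:(lia)) as [Hb _].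
    unfold U1, U2. nra. }
  assert (HD : sqrt ((2 * a0 - l1) ^ 2 + (2 * b0 - l2) ^ 2) <= Rb).
  { apply sqrt_le_sq; [lra|]. nra. }
  assert (HM := mink l1 l2 (2 * a0 - l1) (2 * b0 - l2)).
  replace (l1 + (2 * a0 - l1)) with (2 * a0) in HM by ring.
  replace (l2 + (2 * b0 - l2)) with (2 * b0) in HM by ring.
  replace ((2 * a0) ^ 2 + (2 * b0) ^ 2) with ((2 * 2) * (a0 ^ 2 + b0 ^ 2)) in HM by ring.
  rewrite sqrt_mult_alt in HM by lra. rewrite sqrt_square in HM by lra.
  unfold Cnorm. fold a0 b0. simpl fst; simpl snd. lra.
Qed.

Definition vfam (c : R) (n : Z) : R := exp (- c * Rabs (IZR n)).
Definition ufam (c : R) (n : Z) : R := exp (- c * (Rabs (IZR n + 1/2) - 1/2)).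

Lemma exp_nat c k : exp (- c * INR k) = exp (- c) ^ k.
Proof.
  induction k as [|k IH].
  - simpl. rewrite Rmult_0_r, exp_0. reflexivity.
  - rewrite S_INR, <- tech_pow_Rmult, <- IH, <- exp_plus. f_equal. ring.
Qed.

Lemma IZR_pos_nat N : IZR (Z.of_nat N) = INR N.
Proof. rewrite INR_IZR_INZ. reflexivity. Qed.

Lemma vfam_sum c N : c > 0 ->
  symsum (vfam c) N = (1 + exp (- c) - 2 * exp (- c) ^ (S N)) / (1 - exp (- c)).
Proof.
  intros Hc. assert (Hr : exp (- c) < 1).
  { rewrite <- exp_0. apply exp_increasing. lra. }
  induction N as [|N IH].
  - rewrite symsum_0. unfold vfam. rewrite Rabs_R0, Rmult_0_r, exp_0. field. lra.
  - rewrite symsum_S, IH. unfold vfam.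
    rewrite opp_IZR, Rabs_Ropp, IZR_pos_nat, Rabs_pos_eq by apply pos_INR.
    rewrite exp_nat. simpl. field. lra.
Qed.

Lemma vfam_bound c N : c > 0 ->
  symsum (vfam c) N <= (1 + exp (- c)) / (1 - exp (- c)).
Proof.
  intros Hc. rewrite vfam_sum by auto.
  assert (Hr : exp (- c) < 1). { rewrite <- exp_0. apply exp_increasing. lra. }
  assert (Hp : 0 <= exp (- c) ^ S N) by (apply pow_le; left; apply exp_pos).
  unfold Rdiv. apply Rmult_le_compat_r.
  - left. apply Rinv_0_lt_compat. lra.
  - lra.
Qed.

Lemma ufam_sum c N : c > 0 ->
  symsum (ufam c) N = (2 - exp (- c) ^ N - exp (- c) ^ (S N)) / (1 - exp (- c)).
Proof.
  intros Hc. assert (Hr : exp (- c) < 1).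
  { rewrite <- exp_0. apply exp_increasing. lra. }
  induction N as [|N IH].
  - rewrite symsum_0. unfold ufam. simpl.
    replace (- c * (Rabs (0 + 1 / 2) - 1 / 2)) with 0.
    + rewrite exp_0. field. lra.
    + rewrite Rabs_pos_eq by lra. ring.
  - rewrite symsum_S, IH. unfold ufam.
    rewrite opp_IZR, IZR_pos_nat.
    rewrite (Rabs_pos_eq (INR (S N) + 1/2)) by (assert (H := pos_INR (S N)); lra).
    rewrite Rabs_left1 by (rewrite S_INR; assert (H := pos_INR N); lra).
    replace (- (- INR (S N) + 1 / 2) - 1 / 2) with (INR N) by (rewrite S_INR; lra).
    replace (INR (S N) + 1 / 2 - 1 / 2) with (INR (S N)) by ring.
    rewrite !exp_nat. simpl. field. lra.
Qed.

Lemma ufam_bound c N : c > 0 ->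
  symsum (ufam c) N <= 2 / (1 - exp (- c)).
Proof.
  intros Hc. rewrite ufam_sum by auto.
  assert (Hr : exp (- c) < 1). { rewrite <- exp_0. apply exp_increasing. lra. }
  assert (Hp : 0 <= exp (- c) ^ S N) by (apply pow_le; left; apply exp_pos).
  assert (Hp' : 0 <= exp (- c) ^ N) by (apply pow_le; left; apply exp_pos).
  unfold Rdiv. apply Rmult_le_compat_r.
  - left. apply Rinv_0_lt_compat. lra.
  - lra.
Qed.

Lemma Cnorm_Cexp z : Cnorm (Cexp z) = exp (fst z).
Proof.
  unfold Cnorm, Cexp. cbn [fst snd].
  replace ((exp (fst z) * cos (snd z)) ^ 2 + (exp (fst z) * sin (snd z)) ^ 2)
    with (exp (fst z) ^ 2 * (Rsqr (sin (snd z)) + Rsqr (cos (snd z)))) by (unfold Rsqr; ring).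
  rewrite sin2_cos2, Rmult_1_r. apply sqrt_pow2. left. apply exp_pos.
Qed.

Lemma term_norm a b t n1 n2 :
  Cnorm (theta_term a b C2zero t n1 n2) =
  exp (- PI * ((IZR n1 + fst a) * (IZR n1 + fst a) * Im1 t
             + 2 * (IZR n1 + fst a) * (IZR n2 + snd a) * Im12 t
             + (IZR n2 + snd a) * (IZR n2 + snd a) * Im2 t)).
Proof.
  unfold theta_term. rewrite Cnorm_Cexp. f_equal.
  unfold Cmul, Cscal, Cadd, Ci, CofR, C2zero, Im1, Im12, Im2. simpl. field.
Qed.

Lemma core_poly X M : (X = 1/2 \/ X >= 3/2) -> (M = 0 \/ M = 1 \/ M >= 2) ->
  X * X - X * M + M * M - X - M / 2 + 1/4 >= 0.
Proof.
  intros HX HM. destruct HM as [->|[->|HM]].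
  - nra.
  - destruct HX as [->|HX]; [nra|]. assert (0 <= (X - 3/2) * (X - 1/2)) by (apply Rmult_le_pos; lra). nra.
  - assert (0 <= (2 * X - (M + 1)) * (2 * X - (M + 1))) by apply Rle_0_sqr.
    assert (0 <= M * (3 * M - 4)) by (apply Rmult_le_pos; lra). nra.
Qed.

Lemma half_abs n : Rabs (IZR n + 1/2) = 1/2 \/ Rabs (IZR n + 1/2) >= 3/2.
Proof.
  assert (H : (n = 0 \/ n = -1 \/ 1 <= n \/ n <= -2)%Z) by lia.
  destruct H as [->|[->|[H|H]]].
  - left. rewrite Rabs_pos_eq; lra.
  - left. rewrite Rabs_left; lra.
  - right. apply IZR_le in H. rewrite Rabs_pos_eq; lra.
  - right. apply IZR_le in H. rewrite Rabs_left; lra.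
Qed.

Lemma int_abs n : Rabs (IZR n) = 0 \/ Rabs (IZR n) = 1 \/ Rabs (IZR n) >= 2.
Proof.
  assert (H : (n = 0 \/ n = -1 \/ n = 1 \/ 2 <= n \/ n <= -2)%Z) by lia.
  destruct H as [->|[->|[->|[H|H]]]].
  - left. apply Rabs_R0.
  - right; left. rewrite Rabs_left; lra.
  - right; left. rewrite Rabs_pos_eq; lra.
  - right; right. apply IZR_le in H. rewrite Rabs_pos_eq; lra.
  - right; right. apply IZR_le in H. rewrite Rabs_left; lra.
Qed.

Lemma core_gen x m y1 y12 : y1 > 0 -> 0 <= 2 * y12 -> 2 * y12 <= y1 ->
  (Rabs x = 1/2 \/ Rabs x >= 3/2) -> (Rabs m = 0 \/ Rabs m = 1 \/ Rabs m >= 2) ->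
  x * x * y1 + 2 * x * m * y12 + m * m * y1 >=
  y1 / 4 + y1 * (Rabs x - 1/2) + y1 / 2 * Rabs m.
Proof.
  intros Hy Hy12a Hy12b HX HM.
  assert (HP := core_poly _ _ HX HM).
  assert (E1 : x * x = Rabs x * Rabs x).
  { rewrite <- Rabs_mult. rewrite Rabs_pos_eq; nra. }
  assert (E2 : m * m = Rabs m * Rabs m).
  { rewrite <- Rabs_mult. rewrite Rabs_pos_eq; nra. }
  assert (E3 : - (Rabs x * Rabs m) <= x * m).
  { rewrite <- Rabs_mult. assert (H := Rabs_Ropp (x * m)). assert (H' := Rle_abs (- (x * m))). lra. }
  assert (HXM : 0 <= Rabs x * Rabs m) by (apply Rmult_le_pos; apply Rabs_pos).
  assert (E4 : - (Rabs x * Rabs m) * y1 <= 2 * x * m * y12).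
  { assert (- (Rabs x * Rabs m) * (2 * y12) <= (x * m) * (2 * y12)) by nra.
    assert (- (Rabs x * Rabs m) * y1 <= - (Rabs x * Rabs m) * (2 * y12)) by nra. nra. }
  rewrite E1, E2.
  set (X := Rabs x) in *. set (M := Rabs m) in *.
  assert (y1 * (X * X - X * M + M * M - X - M / 2 + 1/4) >= 0) by nra.
  nra.
Qed.

Definition ind1 (a b : Z) : R :=
  if andb (Z.eqb b 0) (orb (Z.eqb a 0) (Z.eqb a (-1))) then 1 else 0.
Definition ind3 (a b : Z) : R :=
  if andb (Z.eqb a 0) (orb (Z.eqb b 0) (Z.eqb b (-1))) then 1 else 0.

Lemma ind1_range a b : 0 <= ind1 a b <= 1.
Proof. unfold ind1. destruct (andb _ _); lra. Qed.
Lemma ind3_range a b : 0 <= ind3 a b <= 1.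
Proof. unfold ind3. destruct (andb _ _); lra. Qed.

Lemma ind1_SQ (h : Z -> Z -> R) N : (1 <= N)%nat ->
  SQ (fun a b => ind1 a b * h a b) N = h 0%Z 0%Z + h (-1)%Z 0%Z.
Proof.
  intros HN. rewrite (SQ_supp _ 1); auto.
  - unfold SQ, symsum. simpl. unfold ind1. simpl. ring.
  - intros a b Hab. unfold ind1.
    destruct (Z.eqb_spec b 0), (Z.eqb_spec a 0), (Z.eqb_spec a (-1)); simpl; try lia; ring.
Qed.

Lemma ind3_SQ (h : Z -> Z -> R) N : (1 <= N)%nat ->
  SQ (fun a b => ind3 a b * h a b) N = h 0%Z 0%Z + h 0%Z (-1)%Z.
Proof.
  intros HN. rewrite (SQ_supp _ 1); auto.
  - unfold SQ, symsum. simpl. unfold ind3. simpl. ring.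
  - intros a b Hab. unfold ind3.
    destruct (Z.eqb_spec a 0), (Z.eqb_spec b 0), (Z.eqb_spec b (-1)); simpl; try lia; ring.
Qed.

Lemma main1_eq b2 t :
  theta_term (1/2, 0) (0, b2) C2zero t 0 0 = theta_term (1/2, 0) (0, b2) C2zero t (-1) 0.
Proof.
  unfold theta_term. simpl fst; simpl snd.
  replace (IZR (-1) + 1/2) with (- (1/2)) by lra.
  replace (IZR 0 + 1/2) with (1/2) by lra.
  replace (IZR 0 + 0) with 0 by lra.
  f_equal. unfold Cmul, Cscal, Cadd, CofR, C2zero. simpl. f_equal; ring.
Qed.

Lemma main3_eq b1 t :
  theta_term (0, 1/2) (b1, 0) C2zero t 0 0 = theta_term (0, 1/2) (b1, 0) C2zero t 0 (-1).
Proof.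
  unfold theta_term. simpl fst; simpl snd.
  replace (IZR (-1) + 1/2) with (- (1/2)) by lra.
  replace (IZR 0 + 1/2) with (1/2) by lra.
  replace (IZR 0 + 0) with 0 by lra.
  f_equal. unfold Cmul, Cscal, Cadd, CofR, C2zero. simpl. f_equal; ring.
Qed.

Lemma PI_ub32 : PI < 16/5.
Proof.
  destruct (Rlt_or_le PI (16/5)) as [H|H]; [exact H|exfalso].
  assert (H1 := sin_ge_0 (16/5) ltac:(lra) H).
  assert (H2 := proj2 (SIN (16/5) ltac:(lra) H)).
  unfold sin_ub, sin_approx, sin_term in H2.
  cbv [sum_f_R0] in H2.
  rewrite !INR_IZR_INZ in H2.
  replace (Z.of_nat (fact (2*0+1))) with 1%Z in H2 by (vm_compute; reflexivity).
  replace (Z.of_nat (fact (2*1+1))) with 6%Z in H2 by (vm_compute; reflexivity).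
  replace (Z.of_nat (fact (2*2+1))) with 120%Z in H2 by (vm_compute; reflexivity).
  replace (Z.of_nat (fact (2*3+1))) with 5040%Z in H2 by (vm_compute; reflexivity).
  replace (Z.of_nat (fact (2*4+1))) with 362880%Z in H2 by (vm_compute; reflexivity).
  simpl in H2.
  lra.
Qed.

Lemma PI_lb3 : 3 < PI.
Proof. assert (H := PI2_3_2). lra. Qed.

Lemma exp_mono x y : x <= y -> exp x <= exp y.
Proof.
  intros [H|H]; [left; apply exp_increasing; auto| subst; lra].
Qed.

Lemma exp_pow_INR n y : exp (INR n * y) = exp y ^ n.
Proof.
  induction n as [|n IH].
  - simpl. rewrite Rmult_0_l, exp_0. reflexivity.
  - rewrite S_INR, <- tech_pow_Rmult, <- IH, <- exp_plus. f_equal. ring.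
Qed.

Lemma exp_lb n x : (0 < n)%nat -> 0 <= 1 + x / INR n -> (1 + x / INR n) ^ n <= exp x.
Proof.
  intros Hn H.
  assert (HnR : 0 < INR n) by (apply lt_0_INR; lia).
  replace x with (INR n * (x / INR n)) at 2 by (field; lra).
  rewrite exp_pow_INR. apply pow_incr. split; [exact H|]. apply exp_ineq1_le.
Qed.

Lemma exp_neg_le x L : 0 < L -> L <= exp x -> exp (- x) <= / L.
Proof. intros HL H. rewrite exp_Ropp. apply Rinv_le_contravar; auto. Qed.

Lemma exp2_lb : 7 <= exp 2.
Proof.
  eapply Rle_trans; [|apply (exp_lb 64); [lia|]].
  - replace (INR 64) with 64 by (simpl; lra). simpl. lra.
  - replace (INR 64) with 64 by (simpl; lra). lra.
Qed.

Lemma exp3_lb : 18 <= exp 3.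
Proof.
  eapply Rle_trans; [|apply (exp_lb 64); [lia|]].
  - replace (INR 64) with 64 by (simpl; lra). simpl. lra.
  - replace (INR 64) with 64 by (simpl; lra). lra.
Qed.

Lemma expm43 : 16/81 <= exp (-4/3).
Proof.
  eapply Rle_trans; [|apply (exp_lb 4); [lia|]].
  - replace (INR 4) with 4 by (simpl; lra). simpl. lra.
  - replace (INR 4) with 4 by (simpl; lra). lra.
Qed.

Lemma expm1615 : 33/100 <= exp (-16/15).
Proof.
  eapply Rle_trans; [|apply (exp_lb 16); [lia|]].
  - replace (INR 16) with 16 by (simpl; lra). simpl. lra.
  - replace (INR 16) with 16 by (simpl; lra). lra.
Qed.

Lemma expm3215 : 109/1000 <= exp (-32/15).
Proof.
  eapply Rle_trans; [|apply (exp_lb 32); [lia|]].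
  - replace (INR 32) with 32 by (simpl; lra). simpl. lra.
  - replace (INR 32) with 32 by (simpl; lra). lra.
Qed.

Lemma div_ge a b s : 0 < s -> a * s <= b -> a <= b / s.
Proof. intros Hs H. apply (Rmult_le_reg_r s); auto. unfold Rdiv. rewrite Rmult_assoc, Rinv_l by lra. lra. Qed.
Lemma div_le a b s : 0 < s -> b <= a * s -> b / s <= a.
Proof. intros Hs H. apply (Rmult_le_reg_r s); auto. unfold Rdiv. rewrite Rmult_assoc, Rinv_l by lra. lra. Qed.
Lemma div_nn a s : 0 <= a -> 0 < s -> 0 <= a / s.
Proof. intros. unfold Rdiv. apply Rmult_le_pos; auto. left. apply Rinv_0_lt_compat; auto. Qed.

Lemma tb_le1 y1 y2 : 0 < y1 -> 0 < y2 -> theta_bound y1 y2 <= 1.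
Proof.
  intros H1 H2. unfold theta_bound.
  assert (S1 := sqrt_lt_R0 _ H1). assert (S2 := sqrt_lt_R0 _ H2).
  assert (A1 : 0 <= sqrt 6 / sqrt y1) by (apply div_nn; [apply sqrt_pos|auto]).
  assert (A2 : 0 <= 2 / sqrt y2) by (apply div_nn; [lra|auto]).
  assert (A3 : 0 <= sqrt 2 / sqrt y2) by (apply div_nn; [apply sqrt_pos|auto]).
  assert (P1 := exp_pos (- PI * y1 / 6)). assert (P2 := exp_pos (- PI * y2 / 4)).
  assert (P3 := exp_pos (- PI * y2 / 2)). assert (P4 := exp_pos (- PI * y2)).
  assert (P5 := exp_pos (- 2 * PI * y1)).
  set (X := (1 + sqrt 6 / sqrt y1) * exp (- PI * y1 / 6)).
  set (Y := (1 + 2 / sqrt y2) * exp (- PI * y2 / 4)).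
  set (Z := (2 + sqrt 2 / sqrt y2) * exp (- PI * y2 / 2)).
  set (W := (1 + (1 + sqrt 2 / sqrt y2) * exp (- PI * y2 / 2)) * exp (- 2 * PI * y1)).
  assert (0 <= X) by (unfold X; apply Rmult_le_pos; lra).
  assert (0 <= Y) by (unfold Y; apply Rmult_le_pos; lra).
  assert (0 <= Z) by (unfold Z; apply Rmult_le_pos; lra).
  assert (0 <= W).
  { unfold W. apply Rmult_le_pos; [|lra]. assert (0 <= (1 + sqrt 2 / sqrt y2) * exp (- PI * y2 / 2)) by (apply Rmult_le_pos; lra). lra. }
  nra.
Qed.

Lemma tb_case1_nonpos y1 y2 : 0 < y1 -> y1 <= 2 -> 0 < y2 -> theta_bound y1 y2 <= 0.
Proof.
  intros H1 H1' H2. unfold theta_bound.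
  assert (S1 := sqrt_lt_R0 _ H1). assert (S2 := sqrt_lt_R0 _ H2).
  assert (Q6 : 12/5 <= sqrt 6) by (apply sqrt_ge_sq; lra).
  assert (Qy : sqrt y1 <= 71/50) by (apply sqrt_le_sq; lra).
  assert (A1 : 120/71 <= sqrt 6 / sqrt y1) by (apply div_ge; [auto|nra]).
  assert (A2 : 0 <= 2 / sqrt y2) by (apply div_nn; [lra|auto]).
  assert (A3 : 0 <= sqrt 2 / sqrt y2) by (apply div_nn; [apply sqrt_pos|auto]).
  assert (E1 : 16/81 <= exp (- PI * y1 / 6)).
  { eapply Rle_trans; [apply expm43|]. apply exp_mono.
    assert (H := PI_4). assert (H' := PI_RGT_0). nra. }
  assert (P2 := exp_pos (- PI * y2 / 4)).
  assert (P3 := exp_pos (- PI * y2 / 2)). assert (P4 := exp_pos (- PI * y2)).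
  assert (P5 := exp_pos (- 2 * PI * y1)).
  set (X := (1 + sqrt 6 / sqrt y1) * exp (- PI * y1 / 6)).
  set (Y := (1 + 2 / sqrt y2) * exp (- PI * y2 / 4)).
  set (Z := (2 + sqrt 2 / sqrt y2) * exp (- PI * y2 / 2)).
  set (W := (1 + (1 + sqrt 2 / sqrt y2) * exp (- PI * y2 / 2)) * exp (- 2 * PI * y1)).
  assert (1/2 <= X).
  { unfold X. apply Rle_trans with ((1 + 120/71) * (16/81)); [lra|].
    apply Rmult_le_compat; lra. }
  assert (0 <= Y) by (unfold Y; apply Rmult_le_pos; lra).
  assert (0 <= Z) by (unfold Z; apply Rmult_le_pos; lra).
  assert (0 <= W).
  { unfold W. apply Rmult_le_pos; [|lra]. assert (0 <= (1 + sqrt 2 / sqrt y2) * exp (- PI * y2 / 2)) by (apply Rmult_le_pos; lra). lra. }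
  nra.
Qed.

Lemma tb_case3_nonpos y1 y2 : 0 < y1 -> y1 <= 4/3 -> 0 < y2 -> theta_bound y2 y1 <= 0.
Proof.
  intros H1 H1' H2. unfold theta_bound.
  assert (S1 := sqrt_lt_R0 _ H1). assert (S2 := sqrt_lt_R0 _ H2).
  assert (Q2 : 1414/1000 <= sqrt 2) by (apply sqrt_ge_sq; lra).
  assert (Qy : sqrt y1 <= 231/200) by (apply sqrt_le_sq; lra).
  assert (A1 : 0 <= sqrt 6 / sqrt y2) by (apply div_nn; [apply sqrt_pos|auto]).
  assert (A2 : 173/100 <= 2 / sqrt y1) by (apply div_ge; [auto|nra]).
  assert (A3 : 1224/1000 <= sqrt 2 / sqrt y1) by (apply div_ge; [auto|nra]).
  assert (HPI := PI_ub32). assert (HPI0 := PI_RGT_0).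
  assert (E1 : 33/100 <= exp (- PI * y1 / 4)).
  { eapply Rle_trans; [apply expm1615|]. apply exp_mono. nra. }
  assert (E2 : 109/1000 <= exp (- PI * y1 / 2)).
  { eapply Rle_trans; [apply expm3215|]. apply exp_mono. nra. }
  assert (P1 := exp_pos (- PI * y2 / 6)).
  assert (P4 := exp_pos (- PI * y1)).
  assert (P5 := exp_pos (- 2 * PI * y2)).
  set (X := (1 + sqrt 6 / sqrt y2) * exp (- PI * y2 / 6)).
  set (Y := (1 + 2 / sqrt y1) * exp (- PI * y1 / 4)).
  set (Z := (2 + sqrt 2 / sqrt y1) * exp (- PI * y1 / 2)).
  set (W := (1 + (1 + sqrt 2 / sqrt y1) * exp (- PI * y1 / 2)) * exp (- 2 * PI * y2)).
  assert (0 <= X) by (unfold X; apply Rmult_le_pos; lra).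
  assert (9/10 <= Y).
  { unfold Y. apply Rle_trans with ((1 + 173/100) * (33/100)); [lra|].
    apply Rmult_le_compat; lra. }
  assert (35/100 <= Z).
  { unfold Z. apply Rle_trans with ((2 + 1224/1000) * (109/1000)); [lra|].
    apply Rmult_le_compat; lra. }
  assert (0 <= W).
  { unfold W. apply Rmult_le_pos; [|lra]. assert (0 <= (1 + sqrt 2 / sqrt y1) * exp (- PI * y1 / 2)) by (apply Rmult_le_pos; lra). lra. }
  nra.
Qed.

Lemma tb_pos y1 y2 : 4 <= y1 -> y1 <= y2 -> theta_bound y1 y2 > 0.
Proof.
  intros H1 H2. unfold theta_bound.
  assert (S1 : 2 <= sqrt y1) by (apply sqrt_ge_sq; lra).
  assert (S2 : 2 <= sqrt y2) by (apply sqrt_ge_sq; lra).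
  assert (Q6 : sqrt 6 <= 245/100) by (apply sqrt_le_sq; lra).
  assert (Q2 : sqrt 2 <= 2) by (apply sqrt_le_sq; lra).
  assert (Q6' := sqrt_pos 6). assert (Q2' := sqrt_pos 2).
  assert (A1 : sqrt 6 / sqrt y1 <= 1225/1000) by (apply div_le; [lra|nra]).
  assert (A2 : 2 / sqrt y2 <= 1) by (apply div_le; [lra|nra]).
  assert (A3 : sqrt 2 / sqrt y2 <= 1) by (apply div_le; [lra|nra]).
  assert (A1' : 0 <= sqrt 6 / sqrt y1) by (apply div_nn; lra).
  assert (A2' : 0 <= 2 / sqrt y2) by (apply div_nn; lra).
  assert (A3' : 0 <= sqrt 2 / sqrt y2) by (apply div_nn; lra).
  assert (HPI := PI_lb3).
  assert (L2 := exp2_lb). assert (L3 := exp3_lb).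
  assert (L6 : 324 <= exp 6).
  { replace 6 with (3 + 3) by ring. rewrite exp_plus. nra. }
  assert (L12 : 100000 <= exp 12).
  { replace 12 with (6 + 6) by ring. rewrite exp_plus. nra. }
  assert (E1 : exp (- PI * y1 / 6) <= / 7).
  { eapply Rle_trans; [apply exp_mono|apply exp_neg_le; [lra|exact L2]]. nra. }
  assert (E2 : exp (- PI * y2 / 4) <= / 18).
  { eapply Rle_trans; [apply exp_mono|apply exp_neg_le; [lra|exact L3]]. nra. }
  assert (E3 : exp (- PI * y2 / 2) <= / 324).
  { eapply Rle_trans; [apply exp_mono|apply exp_neg_le; [lra|exact L6]]. nra. }
  assert (E4 : exp (- PI * y2) <= / 100000).
  { eapply Rle_trans; [apply exp_mono|apply exp_neg_le; [lra|exact L12]]. nra. }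
  assert (E5 : exp (- 2 * PI * y1) <= / 100000).
  { eapply Rle_trans; [apply exp_mono|apply exp_neg_le; [lra|exact L12]]. nra. }
  assert (P1 := exp_pos (- PI * y1 / 6)). assert (P2 := exp_pos (- PI * y2 / 4)).
  assert (P3 := exp_pos (- PI * y2 / 2)). assert (P4 := exp_pos (- PI * y2)).
  assert (P5 := exp_pos (- 2 * PI * y1)).
  set (X := (1 + sqrt 6 / sqrt y1) * exp (- PI * y1 / 6)).
  set (Y := (1 + 2 / sqrt y2) * exp (- PI * y2 / 4)).
  set (Z := (2 + sqrt 2 / sqrt y2) * exp (- PI * y2 / 2)).
  set (W := (1 + (1 + sqrt 2 / sqrt y2) * exp (- PI * y2 / 2)) * exp (- 2 * PI * y1)).
  assert (HX : 0 <= X <= 3179/10000).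
  { unfold X. split; [apply Rmult_le_pos; lra|].
    apply Rle_trans with ((1 + 1225/1000) * / 7); [apply Rmult_le_compat; lra|lra]. }
  assert (HY : 0 <= Y <= 1112/10000).
  { unfold Y. split; [apply Rmult_le_pos; lra|].
    apply Rle_trans with ((1 + 1) * / 18); [apply Rmult_le_compat; lra|lra]. }
  assert (HZ : Z <= 3 / 324).
  { unfold Z. apply Rle_trans with ((2 + 1) * / 324); [apply Rmult_le_compat; lra|lra]. }
  assert (HW : W <= 3 / 100000).
  { unfold W. apply Rle_trans with ((1 + (1 + 1) * 1) * / 100000); [|lra].
    apply Rmult_le_compat; try lra.
    - assert (0 <= (1 + sqrt 2 / sqrt y2) * exp (- PI * y2 / 2)) by (apply Rmult_le_pos; lra). lra.
    - assert ((1 + sqrt 2 / sqrt y2) * exp (- PI * y2 / 2) <= 2 * 1).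
      { apply Rmult_le_compat; lra. }
      lra. }
  assert ((1 + X) * (2 + Y) <= (1 + 3179/10000) * (2 + 1112/10000))
    by (apply Rmult_le_compat; lra).
  lra.
Qed.

Lemma exp_eq1 x : x = 0 -> exp x = 1.
Proof. intros ->. apply exp_0. Qed.

Lemma case1 t b2 :
  0 < Im1 t -> Im1 t <= Im2 t -> 0 <= 2 * Im12 t -> 2 * Im12 t <= Im1 t ->
  exists v : Cx, theta_is (1/2, 0) (0, b2) C2zero t v /\
    Cnorm v * exp (PI * aImA (1/2, 0) t) >= theta_bound (Im1 t) (Im2 t).
Proof.
  intros Hy1 Hy2 Hy12a Hy12b.
  set (y1 := Im1 t) in *. set (y2 := Im2 t) in *. set (y12 := Im12 t) in *.
  assert (HPI := PI_lb3). assert (HPI0 := PI_RGT_0).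
  assert (Hc1 : PI * y1 > 0) by nra. assert (Hc2 : PI * y1 / 2 > 0) by nra.
  set (f := fun n1 n2 => theta_term (1/2, 0) (0, b2) C2zero t n1 n2).
  set (C := exp (- PI * y1 / 4)).
  set (r := exp (- (PI * y1))). set (s := exp (- (PI * y1 / 2))).
  assert (Hr1 : r < 1) by (unfold r; rewrite <- exp_0; apply exp_increasing; lra).
  assert (Hs1 : s < 1) by (unfold s; rewrite <- exp_0; apply exp_increasing; lra).
  assert (Hr0 : 0 < r) by apply exp_pos. assert (Hs0 : 0 < s) by apply exp_pos.
  destruct (theta_general f C (2 / (1 - r)) ((1 + s) / (1 - s)) (ufam (PI * y1)) (vfam (PI * y1 / 2))
              ind1 0 0 (-1) 0 (f 0%Z 0%Z)) as [w [Hw1 [Hw2 Hw]]].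
  - intros a b. unfold f. rewrite term_norm. unfold C, ufam, vfam.
    rewrite <- !exp_plus. apply exp_mono. cbn [fst snd].
    rewrite Rplus_0_r. fold y1 y2 y12.
    assert (Hc := core_gen (IZR a + 1/2) (IZR b) y1 y12 Hy1 Hy12a Hy12b (half_abs a) (int_abs b)).
    assert (IZR b * IZR b * y1 <= IZR b * IZR b * y2).
    { apply Rmult_le_compat_l; [apply Rle_0_sqr|lra]. }
    set (Q := (IZR a + 1 / 2) * (IZR a + 1 / 2) * y1 + 2 * (IZR a + 1 / 2) * IZR b * y12 +
      IZR b * IZR b * y2) in *.
    set (RHS := y1 / 4 + y1 * (Rabs (IZR a + 1 / 2) - 1 / 2) + y1 / 2 * Rabs (IZR b)) in *.
    assert (HQ : RHS <= Q) by (unfold Q; lra).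
    assert (PI * RHS <= PI * Q) by (apply Rmult_le_compat_l; lra).
    unfold RHS in *. lra.
  - left; apply exp_pos.
  - intros; left; apply exp_pos.
  - intros; left; apply exp_pos.
  - intros N. apply ufam_bound. auto.
  - intros N. apply vfam_bound. auto.
  - apply ind1_range.
  - apply ind1_SQ.
  - reflexivity.
  - unfold f. symmetry. apply main1_eq.
  - exists w. split; [split; [exact Hw1|exact Hw2]|].
    assert (U0 : ufam (PI * y1) 0 = 1).
    { unfold ufam. replace (Rabs (IZR 0 + 1 / 2)) with (1/2) by (rewrite Rabs_pos_eq; lra).
      replace (- (PI * y1) * (1 / 2 - 1 / 2)) with 0 by ring. apply exp_0. }
    assert (U1 : ufam (PI * y1) (-1) = 1).
    { unfold ufam. replace (Rabs (IZR (-1) + 1 / 2)) with (1/2) by (rewrite Rabs_left; lra).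
      replace (- (PI * y1) * (1 / 2 - 1 / 2)) with 0 by ring. apply exp_0. }
    assert (V0 : vfam (PI * y1 / 2) 0 = 1).
    { unfold vfam. rewrite Rabs_R0. replace (- (PI * y1 / 2) * 0) with 0 by ring. apply exp_0. }
    assert (Hz : Cnorm (f 0%Z 0%Z) = C).
    { unfold f. rewrite term_norm. unfold C. f_equal. cbn [fst snd]. fold y1. simpl. field. }
    rewrite U0, U1, V0, Hz in Hw.
    assert (HCE : C * exp (PI * aImA (1/2, 0) t) = 1).
    { unfold C. rewrite <- exp_plus. unfold aImA. cbn [fst snd]. fold y1.
      apply exp_eq1. field. }
    assert (HC0 : 0 < C) by apply exp_pos.
    assert (HE0 : 0 < exp (PI * aImA (1/2, 0) t)) by apply exp_pos.
    assert (HN0 : 0 <= Cnorm w) by apply sqrt_pos.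
    destruct (Rle_or_lt y1 2) as [Hsm|Hbig].
    + assert (Hb := tb_case1_nonpos y1 y2 Hy1 Hsm ltac:(lra)).
      assert (0 <= Cnorm w * exp (PI * aImA (1/2, 0) t)) by (apply Rmult_le_pos; lra).
      lra.
    + assert (Hb := tb_le1 y1 y2 Hy1 ltac:(lra)).
      assert (L3 := exp3_lb).
      assert (L6 : 324 <= exp 6).
      { replace 6 with (3 + 3) by ring. rewrite exp_plus. nra. }
      assert (Es : s <= / 18).
      { unfold s. eapply Rle_trans; [apply exp_mono|apply exp_neg_le; [lra|exact L3]]. nra. }
      assert (Er : r <= / 324).
      { unfold r. eapply Rle_trans; [apply exp_mono|apply exp_neg_le; [lra|exact L6]]. nra. }
      assert (Bu : 2 / (1 - r) <= 21/10) by (apply div_le; lra).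
      assert (Bv : (1 + s) / (1 - s) <= 19/17) by (apply div_le; lra).
      assert (Bu0 : 0 <= 2 / (1 - r)) by (apply div_nn; lra).
      assert (Bv0 : 0 <= (1 + s) / (1 - s)) by (apply div_nn; lra).
      assert (BB : 2 / (1 - r) * ((1 + s) / (1 - s)) <= 3).
      { apply Rle_trans with (21/10 * (19/17)); [apply Rmult_le_compat; lra|lra]. }
      assert (HW : C <= Cnorm w).
      { eapply Rle_trans; [|exact Hw].
        replace (2 * C - (C * (2 / (1 - r)) * ((1 + s) / (1 - s)) - C * (1 * 1 + 1 * 1)))
          with (C * (4 - 2 / (1 - r) * ((1 + s) / (1 - s)))) by ring.
        nra. }
      assert (C * exp (PI * aImA (1/2, 0) t) <= Cnorm w * exp (PI * aImA (1/2, 0) t))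
        by (apply Rmult_le_compat_r; lra).
      lra.
Qed.

Lemma case3 t b1 :
  0 < Im1 t -> Im1 t <= Im2 t -> 0 <= 2 * Im12 t -> 2 * Im12 t <= Im1 t ->
  exists v : Cx, theta_is (0, 1/2) (b1, 0) C2zero t v /\
    Cnorm v * exp (PI * aImA (0, 1/2) t) >= theta_bound (Im2 t) (Im1 t).
Proof.
  intros Hy1 Hy2 Hy12a Hy12b.
  set (y1 := Im1 t) in *. set (y2 := Im2 t) in *. set (y12 := Im12 t) in *.
  assert (HPI := PI_lb3). assert (HPI0 := PI_RGT_0).
  assert (Hc1 : PI * y1 > 0) by nra. assert (Hc2 : PI * y1 / 2 > 0) by nra.
  set (f := fun n1 n2 => theta_term (0, 1/2) (b1, 0) C2zero t n1 n2).
  set (C := exp (- PI * y2 / 4)).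
  set (r := exp (- (PI * y1))). set (s := exp (- (PI * y1 / 2))).
  assert (Hr1 : r < 1) by (unfold r; rewrite <- exp_0; apply exp_increasing; lra).
  assert (Hs1 : s < 1) by (unfold s; rewrite <- exp_0; apply exp_increasing; lra).
  assert (Hr0 : 0 < r) by apply exp_pos. assert (Hs0 : 0 < s) by apply exp_pos.
  destruct (theta_general f C ((1 + s) / (1 - s)) (2 / (1 - r)) (vfam (PI * y1 / 2)) (ufam (PI * y1))
              ind3 0 0 0 (-1) (f 0%Z 0%Z)) as [w [Hw1 [Hw2 Hw]]].
  - intros a b. unfold f. rewrite term_norm. unfold C, ufam, vfam.
    rewrite <- !exp_plus. apply exp_mono. cbn [fst snd].
    rewrite Rplus_0_r. fold y1 y2 y12.
    assert (Hc := core_gen (IZR b + 1/2) (IZR a) y1 y12 Hy1 Hy12a Hy12b (half_abs b) (int_abs a)).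
    assert (Hx2 : 1/4 <= (IZR b + 1/2) * (IZR b + 1/2)).
    { assert (E : (IZR b + 1/2) * (IZR b + 1/2) = Rabs (IZR b + 1/2) * Rabs (IZR b + 1/2)).
      { rewrite <- Rabs_mult. rewrite Rabs_pos_eq; [reflexivity|apply Rle_0_sqr]. }
      rewrite E. destruct (half_abs b) as [H|H]; [rewrite H; lra|nra]. }
    assert (((IZR b + 1/2) * (IZR b + 1/2) - 1/4) * y1 <= ((IZR b + 1/2) * (IZR b + 1/2) - 1/4) * y2).
    { apply Rmult_le_compat_l; lra. }
    set (Q := IZR a * IZR a * y1 + 2 * IZR a * (IZR b + 1 / 2) * y12 +
      (IZR b + 1 / 2) * (IZR b + 1 / 2) * y2) in *.
    set (RHS := y2 / 4 + y1 / 2 * Rabs (IZR a) + y1 * (Rabs (IZR b + 1 / 2) - 1 / 2)) in *.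
    assert (HQ : RHS <= Q) by (unfold Q, RHS; lra).
    assert (PI * RHS <= PI * Q) by (apply Rmult_le_compat_l; lra).
    unfold RHS in *. lra.
  - left; apply exp_pos.
  - intros; left; apply exp_pos.
  - intros; left; apply exp_pos.
  - intros N. apply vfam_bound. auto.
  - intros N. apply ufam_bound. auto.
  - apply ind3_range.
  - apply ind3_SQ.
  - reflexivity.
  - unfold f. symmetry. apply main3_eq.
  - exists w. split; [split; [exact Hw1|exact Hw2]|].
    assert (U0 : ufam (PI * y1) 0 = 1).
    { unfold ufam. replace (Rabs (IZR 0 + 1 / 2)) with (1/2) by (rewrite Rabs_pos_eq; lra).
      replace (- (PI * y1) * (1 / 2 - 1 / 2)) with 0 by ring. apply exp_0. }
    assert (U1 : ufam (PI * y1) (-1) = 1).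
    { unfold ufam. replace (Rabs (IZR (-1) + 1 / 2)) with (1/2) by (rewrite Rabs_left; lra).
      replace (- (PI * y1) * (1 / 2 - 1 / 2)) with 0 by ring. apply exp_0. }
    assert (V0 : vfam (PI * y1 / 2) 0 = 1).
    { unfold vfam. rewrite Rabs_R0. replace (- (PI * y1 / 2) * 0) with 0 by ring. apply exp_0. }
    assert (Hz : Cnorm (f 0%Z 0%Z) = C).
    { unfold f. rewrite term_norm. unfold C. f_equal. cbn [fst snd]. fold y2. simpl. field. }
    rewrite U0, U1, V0, Hz in Hw.
    assert (HCE : C * exp (PI * aImA (0, 1/2) t) = 1).
    { unfold C. rewrite <- exp_plus. unfold aImA. cbn [fst snd]. fold y1 y2.
      apply exp_eq1. field. }
    assert (HC0 : 0 < C) by apply exp_pos.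
    assert (HE0 : 0 < exp (PI * aImA (0, 1/2) t)) by apply exp_pos.
    assert (HN0 : 0 <= Cnorm w) by apply sqrt_pos.
    destruct (Rle_or_lt y1 (4/3)) as [Hsm|Hbig].
    + assert (Hb := tb_case3_nonpos y1 y2 Hy1 Hsm ltac:(lra)).
      assert (0 <= Cnorm w * exp (PI * aImA (0, 1/2) t)) by (apply Rmult_le_pos; lra).
      lra.
    + assert (Hb := tb_le1 y2 y1 ltac:(lra) Hy1).
      assert (L2 := exp2_lb).
      assert (L4 : 49 <= exp 4).
      { replace 4 with (2 + 2) by ring. rewrite exp_plus. nra. }
      assert (Es : s <= / 7).
      { unfold s. eapply Rle_trans; [apply exp_mono|apply exp_neg_le; [lra|exact L2]]. nra. }
      assert (Er : r <= / 49).
      { unfold r. eapply Rle_trans; [apply exp_mono|apply exp_neg_le; [lra|exact L4]]. nra. }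
      assert (Bv : 2 / (1 - r) <= 205/100) by (apply div_le; lra).
      assert (Bu : (1 + s) / (1 - s) <= 4/3) by (apply div_le; lra).
      assert (Bv0 : 0 <= 2 / (1 - r)) by (apply div_nn; lra).
      assert (Bu0 : 0 <= (1 + s) / (1 - s)) by (apply div_nn; lra).
      assert (BB : (1 + s) / (1 - s) * (2 / (1 - r)) <= 3).
      { apply Rle_trans with (4/3 * (205/100)); [apply Rmult_le_compat; lra|lra]. }
      assert (HW : C <= Cnorm w).
      { eapply Rle_trans; [|exact Hw].
        replace (2 * C - (C * ((1 + s) / (1 - s)) * (2 / (1 - r)) - C * (1 * 1 + 1 * 1)))
          with (C * (4 - (1 + s) / (1 - s) * (2 / (1 - r)))) by ring.
        nra. }
      assert (C * exp (PI * aImA (0, 1/2) t) <= Cnorm w * exp (PI * aImA (0, 1/2) t))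
        by (apply Rmult_le_compat_r; lra).
      lra.
Qed.

Theorem mainTheorem14 (t : Sym2) (Ht : in_F2 t) :
  (forall a b : R2,
      (a = (1/2, 0) /\ (b = (0, 0) \/ b = (0, 1/2))) ->
      exists v : Cx, theta_is a b C2zero t v /\
        Cnorm v * exp (PI * aImA a t) >= theta_bound (Im1 t) (Im2 t)) /\
  (Im1 t >= 4 -> theta_bound (Im1 t) (Im2 t) > 0) /\
  (forall a b : R2,
      (a = (0, 1/2) /\ (b = (0, 0) \/ b = (1/2, 0))) ->
      exists v : Cx, theta_is a b C2zero t v /\
        Cnorm v * exp (PI * aImA a t) >= theta_bound (Im2 t) (Im1 t)).
Proof.
  destruct Ht as [[Hy1 _] [_ [_ [_ [Hy2 [Hy12b [Hy12a _]]]]]]].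
  split; [|split].
  - intros a b [-> [-> | ->]].
    + apply case1; lra.
    + apply case1; lra.
  - intros H. apply tb_pos; lra.
  - intros a b [-> [-> | ->]].
    + apply case3; lra.
    + apply case3; lra.
Qed.
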